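(* $\mathrm{GL}_6(\mathbb{F}_2)$ does not contain a subgroup isomorphic to $\mathrm{PSL}_2(\mathbb{F}_8)\times C_2$. *)

(* Defs.v *)
From mathcomp Require Import all_boot all_algebra all_fingroup all_solvable all_field.
Set Implicit Arguments. Unset Strict Implicit. Unset Printing Implicit Defensive.
Import GRing.Theory.
Local Open Scope ring_scope.
Local Open Scope group_scope.

Definition SL2 (F : finFieldType) : {set {'GL_2[F]}} :=
  [set g : {'GL_2[F]} | \det (GLval g) == 1%R].

Definition PSL2 (F : finFieldType) := (SL2 F / 'Z(SL2 F))%g.

(* Main.v *)
Require Import Defs.
From mathcomp Require Import all_boot all_algebra all_fingroup all_solvable all_field all_character.
From mathcomp Require Import ring.
Set Implicit Arguments. Unset Strict Implicit. Unset Printing Implicit Defensive.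
Import GRing.Theory.
Local Open Scope group_scope.

Local Notation GL6 := {'GL_6['F_2]}.
Local Notation V6 := 'rV['F_2]_6.

Definition glact (u : V6) (g : GL6) : V6 := (u *m GLval g)%R.

Lemma glact1 : glact^~ 1%g =1 id.
Proof. by move=> u; rewrite /glact GL_1E mulmx1. Qed.

Lemma glactM : forall u, act_morph glact u.
Proof. by move=> u g h; rewrite /glact GL_MxE mulmxA. Qed.

Canonical glaction := TotalAction glact1 glactM.

Definition Fixs (x : GL6) := [set v | glact v (x ^+ 3)%g == v].

Lemma key (x : GL6) (ox : #[x]%g = 9) (S : {set V6})
  (hS : forall v, (glact v x \in S) = (v \in S)) :
  (9 %| #|S :\: Fixs x|)%N.
Proof.
set D := S :\: Fixs x.
have actsD : [acts <[x]>, on D | glaction].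
  rewrite cycle_subG; apply/astabsP => v /=.
  rewrite !inE hS; congr (~~ _ && _).
  have -> : glact (glact v x) (x ^+ 3)%g = glact (glact v (x ^+ 3)%g) x.
    by rewrite -!glactM -expgSr -expgS.
  apply/eqP/eqP => [|->] //; exact: act_inj.
rewrite -(acts_sum_card_orbit actsD); apply: dvdn_sum => T /imsetP [v vD ->].
rewrite card_orbit.
have -> : 'C_<[x]>[v | glaction]%g = 1%g.
  apply/trivgP/subsetP => y /setIP [/cycleP [i ->]] /astab1P /= hv.
  rewrite inE -expg_mod_order ox.
  have hk : forall m, glact v (x ^+ (i %% 9 * m))%g = v.
    move=> m; rewrite expgM; elim: m => [|m IH]; first by rewrite expg0 glact1.
    by rewrite expgS glactM -/(glact v _) -expg_mod_order ox in hv *; rewrite hv.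
  have := ltn_pmod i (isT : 0 < 9)%N; move: (i %% 9)%N hk => k hk.
  have vF : glact v (x ^+ 3)%g != v by move: vD; rewrite !inE => /andP [].
  have hF : forall n, (n %% 9 = 3)%N -> glact v (x ^+ n) != v.
    by move=> n hn; rewrite -expg_mod_order ox hn.
  case: k hk => [|[|[|[|[|[|[|[|[|k]]]]]]]]] hk _ //;
    [ move: (hk 3%N) | move: (hk 6%N) | move: (hk 1%N) | move: (hk 3%N)
    | move: (hk 6%N) | move: (hk 2%N) | move: (hk 3%N) | move: (hk 6%N)];
    by move/eqP; apply: contraLR => _; apply: hF.
by rewrite indexg1 -ox.
Qed.

Lemma F2_2 : (2%:R : 'F_2)%R = 0%R.
Proof. by have := pchar_Fp (isT : prime 2); rewrite inE => /andP [_ /eqP]. Qed.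

Lemma M2_0 (M : 'M['F_2]_6) : (M + M = 0)%R.
Proof. by rewrite -mulr2n -scaler_nat F2_2 scale0r. Qed.

Lemma FixsE (z : GL6) : Fixs z = rowg (kermx (GLval (z ^+ 3) - 1)%R).
Proof.
by apply/setP => v; rewrite !inE sub_kermx mulmxBr mulmx1 subr_eq0.
Qed.

Lemma card_rowg2 m (A : 'M['F_2]_(m, 6)) : #|rowg A| = (2 ^ \rank A)%N.
Proof. by rewrite card_rowg card_Fp. Qed.

Lemma no18 (x y : GL6) : #[x] = 9 -> y ^+ 2 = 1 -> y != 1 -> commute x y -> False.
Proof.
move=> ox y2 y1 cxy.
set X := GLval x; set Y := GLval y.
have cardV : #|[set: V6]| = 64%N by rewrite cardsT card_mx card_Fp.
have cF : #|Fixs x| = 1%N.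
  have := @key x ox setT (fun v => etrans (in_setT _) (esym (in_setT _))).
  rewrite cardsD setTI cardV FixsE card_rowg2 mxrank_ker.
  have := rank_leq_col (GLval (x ^+ 3) - 1)%R.
  have r0 : \rank (GLval (x ^+ 3) - 1)%R != 0%N.
    rewrite mxrank_eq0 subr_eq0; apply: contraTneq isT => e.
    have : (#[x] %| 3)%N by rewrite order_dvdn; apply/eqP/val_inj.
    by rewrite ox.
  move: r0; case: (\rank _) => [|[|[|[|[|[|[|r]]]]]]] //.
set N := (Y - 1)%R.
have XN : (X *m N = N *m X)%R.
  rewrite /N mulmxBr mulmxBl mulmx1 mul1mx /X /Y -!GL_MxE.
  by rewrite (commute_sym cxy) .
have YY : (Y *m Y = 1)%R by rewrite /Y -GL_MxE -(expg1 y) -expgS y2.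
have NN : (N *m N = 0)%R.
  rewrite /N mulmxBl !mulmxBr YY mulmx1 mul1mx.
  have e : forall M : 'M['F_2]_6, (- M = M)%R.
    by move=> M; apply/eqP; rewrite -subr_eq0 -opprD M2_0 oppr0.
  by rewrite !e mulmx1 [(Y + 1)%R]addrC M2_0.
have hS : forall v, (glact v x \in rowg (kermx N)) = (v \in rowg (kermx N)).
  move=> v; rewrite !inE !sub_kermx /glact -/X -mulmxA XN mulmxA.
  apply/eqP/eqP => [h|->]; last by rewrite mul0mx.
  by rewrite -(mulmxK (GL_unitmx x) (v *m N)%R) h mul0mx.
have := key ox hS.
have cUF : #|rowg (kermx N) :&: Fixs x| = 1%N.
  apply/eqP; rewrite eqn_leq; apply/andP; split.
    by apply: leq_trans (subset_leq_card (subsetIr _ _)) _; rewrite cF.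
  by apply/card_gt0P; exists 0%R; rewrite !inE sub0mx /glact mul0mx eqxx.
rewrite cardsD cUF card_rowg2 mxrank_ker.
have rN0 : \rank N != 0%N.
  rewrite mxrank_eq0 /N subr_eq0; apply: contraNneq y1 => e.
  by apply/eqP/val_inj.
have rN6 : \rank N != 6%N.
  apply/negP => h; have uN : N \in unitmx by rewrite -row_full_unit; exact: h.
  move: rN0; rewrite mxrank_eq0 => /negP; apply.
  by rewrite -(mulKmx uN N) NN mulmx0.
have := rank_leq_col N.
by move: rN0 rN6; case: (\rank N) => [|[|[|[|[|[|[|r]]]]]]].
Qed.
Local Close Scope group_scope.
Local Open Scope ring_scope.

Section Mx2.
Variable F : fieldType.

Definition mk (a b c d : F) : 'M[F]_2 :=
  \matrix_(i < 2, j < 2) if val i == 0%N then (if val j == 0%N then a else b)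
                         else (if val j == 0%N then c else d).

Lemma mk_mul a b c d e f g h :
  mk a b c d *m mk e f g h = mk (a * e + b * g) (a * f + b * h) (c * e + d * g) (c * f + d * h).
Proof.
apply/matrixP => i j; rewrite !mxE !big_ord_recr big_ord0 /= !mxE /= add0r.
by case: i => [[|[|i]] Hi] //=; case: j => [[|[|j]] Hj].
Qed.

Lemma mk1 : mk 1 0 0 1 = 1%:M.
Proof.
apply/matrixP => i j; rewrite !mxE.
by case: i => [[|[|i]] Hi] //=; case: j => [[|[|j]] Hj].
Qed.

Lemma det_mk a b c d : \det (mk a b c d) = a * d - b * c.
Proof.
rewrite (expand_det_row _ 0) !big_ord_recr big_ord0 /= add0r /cofactor !det_mx11 !mxE /=.
by rewrite !add0n expr0 expr1; ring.
Qed.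

End Mx2.

Section F8.
Variable F : finFieldType.
Hypothesis hF : #|F| = 8%N.

Lemma F8_2 : (2%:R : F) = 0.
Proof.
have := card_finPcharP (p := 2) (n := 3) hF isT.
by rewrite inE => /andP [_ /eqP].
Qed.

Lemma F8_N (x : F) : - x = x.
Proof. by apply/eqP; rewrite -subr_eq0 -opprD -mulr2n -mulr_natl F8_2 mul0r oppr0. Qed.

Lemma F8_8 (t : F) : t ^+ 8 = t.
Proof. by have := expf_card t; rewrite hF. Qed.

Lemma F8_root : exists t : F, t ^+ 3 + t + 1 = 0.
Proof.
have h2 := F8_2.
have : ~~ ([set: F] \subset [set 0; 1]).
  apply/negP => /subset_leq_card; rewrite cardsT hF cards2.
  by case: (_ != _).
case/subsetPn => t _; rewrite !inE negb_or => /andP [t0 t1].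
have e : t * (t + 1) * (t ^+ 3 + t + 1) * (t ^+ 3 + t ^+ 2 + 1) = 0.
  have -> : t * (t + 1) * (t ^+ 3 + t + 1) * (t ^+ 3 + t ^+ 2 + 1) = t ^+ 8 + t.
    rewrite [RHS](_ : _ = t * (t + 1) * (t ^+ 3 + t + 1) * (t ^+ 3 + t ^+ 2 + 1)
       - 2%:R * (t ^+ 7 + t ^+ 6 + 2%:R * t ^+ 5 + 2%:R * t ^+ 4 + t ^+ 3 + t ^+ 2)).
      by rewrite h2 mul0r subr0.
    ring.
  rewrite F8_8 -mulr2n -mulr_natl h2 mul0r //.
have t10 : t + 1 != 0.
  apply: contraNneq t1 => h; apply/eqP.
  by rewrite -[t](addrK 1) h sub0r F8_N.
move/eqP: e; rewrite !mulf_eq0 (negbTE t0) (negbTE t10) /= => /orP [/eqP h|/eqP h].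
  by exists t.
exists t^-1.
have ut : t^-1 * t = 1 by rewrite mulVf.
have e2 : t^-1 ^+ 3 * (t ^+ 3 + t ^+ 2 + 1) = (t^-1 * t) ^+ 3 + t^-1 * (t^-1 * t) ^+ 2 + t^-1 ^+ 3.
  by ring.
rewrite ut !expr1n mulr1 h mulr0 in e2.
by rewrite e2; ring.
Qed.

End F8.

Lemma GLX n (R : finComUnitRingType) (g : {'GL_n[R]}) k :
  GLval (g ^+ k)%g = GLval g ^+ k.
Proof.
elim: k => [|k IH]; first by rewrite expg0 expr0 GL_1E.
by rewrite expgS exprS GL_ME IH.
Qed.

Lemma group_SL2 (F : finFieldType) : group_set (SL2 F).
Proof.
apply/group_setP; split; first by rewrite inE GL_1E det1.
by move=> g h; rewrite !inE GL_ME det_mulmx => /eqP -> /eqP ->; rewrite mulr1.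
Qed.

Section SL.
Variable F : finFieldType.
Hypothesis hF : #|F| = 8%N.
Variable t : F.
Hypothesis ht0 : t ^+ 3 + t + 1 = 0.

Let h2 := F8_2 hF.
Let ht : t ^+ 3 = t + 1.
Proof. by rewrite -(F8_N hF (t + 1)); apply/eqP; rewrite -subr_eq0 opprK addrA ht0. Qed.

Let E a b := mk b a a (a * t + b).
Let Mt := E 1 0.

Let powE n a b a' : Mt ^+ n = E a b -> a * t + b = a' -> Mt ^+ n.+1 = E a' a.
Proof.
move=> p e; rewrite exprSr p /Mt /E -mulmxE mk_mul -e; congr mk; ring.
Qed.

Let E01 : E 0 1 = 1.
Proof. by rewrite /E mul0r add0r mk1. Qed.

Lemma Mt9 : Mt ^+ 9 = 1 /\ Mt ^+ 3 = E (t ^+ 2 + 1) t.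
Proof.
have p0 : Mt ^+ 0 = E 0 1 by rewrite expr0 E01.
have p1 : Mt ^+ 1 = E 1 0 by apply: (powE p0); ring.
have p2 : Mt ^+ 2 = E t 1 by apply: (powE p1); ring.
have p3 : Mt ^+ 3 = E (t ^+ 2 + 1) t by apply: (powE p2); ring.
have p4 : Mt ^+ 4 = E (t + 1) (t ^+ 2 + 1) by apply: (powE p3); ring: h2 ht.
have p5 : Mt ^+ 5 = E (t + 1) (t + 1) by apply: (powE p4); ring: h2 ht.
have p6 : Mt ^+ 6 = E (t ^+ 2 + 1) (t + 1) by apply: (powE p5); ring: h2 ht.
have p7 : Mt ^+ 7 = E t (t ^+ 2 + 1) by apply: (powE p6); ring: h2 ht.
have p8 : Mt ^+ 8 = E 1 t by apply: (powE p7); ring: h2 ht.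
have p9 : Mt ^+ 9 = E 0 1 by apply: (powE p8); ring: h2 ht.
by rewrite p9 E01.
Qed.

Lemma Mt_det : \det Mt = 1.
Proof. by rewrite det_mk mul0r sub0r mul1r F8_N. Qed.

Lemma PSL_elt : exists2 s, s \in PSL2 F & ((s ^+ 9 == 1) && (s ^+ 3 != 1))%g.
Proof.
have uM : Mt \in unitmx by rewrite unitmxE Mt_det unitr1.
pose m : {'GL_2[F]} := insubd (1%g : {'GL_2[F]}) Mt.
have mE : GLval m = Mt by apply: insubdK.
have mSL : m \in SL2 F by rewrite inE mE Mt_det.
pose G := Group (group_SL2 F).
have mG : m \in G := mSL.
have nZ : forall k, (m ^+ k)%g \in 'N('Z(G))%g.
  move=> k; apply: groupX.
  exact: (subsetP (normal_norm (center_normal G))).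
exists (coset 'Z(G) m); first exact (mem_quotient 'Z(G)%G mG).
rewrite -!morphX ?(nZ 1%N) //.
apply/andP; split.
  have -> : (m ^+ 9)%g = 1%g by apply: val_inj; change (GLval (m ^+ 9)%g = GLval (1%g : {'GL_2[F]})); rewrite GLX mE (Mt9).1 GL_1E.
  by rewrite morph1.
apply/negP => /eqP /(coset_idr (nZ 3%N)) /centerP [_ cm].
have uU : mk (1 : F) 1 0 1 \in unitmx by rewrite unitmxE det_mk !mul1r ?mul0r subr0 unitr1.
pose u : {'GL_2[F]} := insubd (1%g : {'GL_2[F]}) (mk 1 1 0 1).
have uE : GLval u = mk (1 : F) 1 0 1 by apply: insubdK.
have uG : u \in G by rewrite inE uE det_mk !mul1r ?mul0r subr0.
have := cm u uG => /(congr1 GLval); rewrite !GL_ME mE uE -[Mt * (Mt * Mt)]/(Mt ^+ 3) (Mt9).2 /E -!mulmxE !mk_mul.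
move=> /(congr1 (fun A : 'M[F]_2 => A 0 0)); rewrite !mxE /=.
rewrite !mulr1 !mulr0 addr0 !mul1r -{1}[t]addr0 => /addrI h0.
have e1 : (1 : F) = t ^+ 3 + t + 1 - t * (t ^+ 2 + 1) by ring.
by move: e1; rewrite ht0 -h0 mulr0 subr0 => /eqP; rewrite oner_eq0.
Qed.

End SL.
Local Close Scope ring_scope.

Lemma order9 (gT : finGroupType) (x : gT) : (x ^+ 9 == 1)%g -> (x ^+ 3 != 1)%g -> order x = 9%N.
Proof.
rewrite -!order_dvdn => d9 n3.
have : (order x <= 9)%N by apply: dvdn_leq.
move: (order_gt0 x) d9 n3; case: (order x) => [|[|[|[|[|[|[|[|[|[|k]]]]]]]]]] //.
Qed.


Lemma pX (g1 g2 : finGroupType) (u : g1) (v : g2) n : ((u, v) ^+ n = (u ^+ n, v ^+ n))%g.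
Proof.
elim: n => [|n IH]; first by [].
by rewrite !expgS IH.
Qed.

Theorem lemma3p21 (F : finFieldType) (hF : #|F| = 8) :
  ~ exists H : {group {'GL_6['F_2]}},
      (H \isog setX (PSL2 F) (Zp 2))%g.
Proof.
case=> H iso.
pose G := Group (group_SL2 F).
pose BG := (setX (G / 'Z(G)) (Zp 2))%G.
have iso' : (H \isog BG)%g := iso.
case/isogP: iso' => f injf fH.
have [t ht] := F8_root hF.
have [s sP /andP [s9 s3]] := PSL_elt hF ht.
pose c : 'Z_2 := Zp1.
have aS : ((s, 1%g) : coset_of 'Z(G) * 'Z_2) \in (f @* H)%g.
  by rewrite fH in_setX; apply/andP; split; [exact: sP | exact: group1].
have bS : ((1%g, c) : coset_of 'Z(G) * 'Z_2) \in (f @* H)%g.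
  by rewrite fH in_setX; apply/andP; split; [exact: group1 | rewrite inE].
case/morphimP: aS => x _ xH ax.
case/morphimP: bS => y _ yH b_y.
have eq1 : forall z n, z \in H -> ((f z) ^+ n == 1)%g = (z ^+ n == 1)%g.
  by move=> z n zH; rewrite -morphX // morph_injm_eq1 // groupX.
apply: (@no18 x y).
- apply: order9; rewrite -!eq1 // -ax pX expg1n.
  + by rewrite (eqP s9).
  + by apply: contra s3 => /eqP/(congr1 fst) /= /eqP.
- have c2 : (c ^+ 2 = 1)%g by apply/eqP.
  by apply/eqP; rewrite -eq1 // -b_y pX expg1n c2.
- rewrite -(expg1 y) -eq1 // -b_y expg1.
  by apply/negP => /eqP/(congr1 snd) /= /eqP.
- apply: (injmP injf); rewrite ?groupM // !morphM // -ax -b_y.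
  by change ((s * 1, 1 * c) = (1 * s, c * 1))%g; rewrite !mulg1 !mul1g.
Qed.
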